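(* Let $K$ be a field equipped with a field endomorphism $\sigma$, and for a matrix $E$ over $K$ and $j\in\mathbb{N}$ let $E^{(j)}$ denote the matrix obtained by applying $\sigma^j$ entrywise. Let $E_1,\ldots,E_t\in K^{p\times q}$ with $t\ge 1$. For each integer $k\ge 1$ let $M_k$ be the block matrix with $k$ block rows and $k+t-1$ block columns (each block of size $p\times q$) whose block in block row $a$ and block column $b$ ($0\le a\le k-1$, $0\le b\le k+t-2$) is $E_{b-a+1}^{(a)}$ if $0\le b-a\le t-1$ and the zero $p\times q$ matrix otherwise; i.e. \[M_k=\begin{pmatrix} E_1&E_2&\cdots&E_t&&&\\ &E_1^{(1)}&E_2^{(1)}&\cdots&E_t^{(1)}&&\\ &&\ddots&\ddots&\ddots&\ddots&\\ &&&E_1^{(k-1)}&E_2^{(k-1)}&\cdots&E_t^{(k-1)} \end{pmatrix}.\] Then there exist $d'\in\mathbb{N}$ and $s'\in\mathbb{Z}$ such that $\operatorname{rank}_K(M_k)=d'k+s'$ for all sufficiently large $k$. Moreover, the least $k_0$ such that $\operatorname{rank}_K(M_k)=d'k+s'$ holds for all $k\ge k_0$ is at most $(t-1)(\min\{p,q\}+1)$. *)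

(* Defs.v *)
From HB Require Import structures.
From mathcomp Require Import all_boot all_order all_algebra.
Set Implicit Arguments. Unset Strict Implicit. Unset Printing Implicit Defensive.
Import Order.TTheory GRing.Theory Num.Theory.
Local Open Scope ring_scope.

(* E : 'I_t -> 'M_(p,q) encodes E_1, ..., E_t (E_{l+1} = E l).
   sigmaj sigma j E = E^{(j)} : sigma^j applied entrywise. *)
Definition sigmaj (K : fieldType) (sigma : {rmorphism K -> K}) (j : nat)
  (p q : nat) (E : 'M[K]_(p, q)) : 'M[K]_(p, q) :=
  map_mx (iter j sigma) E.

Definition Mblock (K : fieldType) (sigma : {rmorphism K -> K}) (p q t : nat)
  (E : 'I_t -> 'M[K]_(p, q)) (a b : nat) : 'M[K]_(p, q) :=
  if (a <= b)%N then
    match (insub (b - a)%N : option 'I_t) with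
    | Some l => sigmaj sigma a (E l)
    | None => 0
    end
  else 0.

Definition Mk (K : fieldType) (sigma : {rmorphism K -> K}) (p q t : nat)
  (E : 'I_t -> 'M[K]_(p, q)) (k : nat) :=
  \mxblock_(a < k, b < k + t - 1) Mblock sigma E a b.

(* Main.v *)
Require Import Defs.
From HB Require Import structures.
From mathcomp Require Import all_boot all_order all_algebra.
From mathcomp Require Import zify.
From Stdlib Require Classical.
Set Implicit Arguments. Unset Strict Implicit. Unset Printing Implicit Defensive.
Import Order.TTheory GRing.Theory Num.Theory.

Lemma ev_const v (g : nat -> nat) : (forall k, g k.+1 <= g k) -> g 0 <= v ->
  exists K, forall k, K <= k -> g k = g K.
Proof.
elim: v g => [|v IH] g hg h0.
  have z : forall k, g k = 0.
    elim=> [|k IHk]; first by lia.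
    by have := hg k; lia.
  by exists 0 => k _; rewrite !z.
have mono : forall m n, m <= n -> g n <= g m.
  move=> m n /subnK <-; elim: (n - m) => [|i IHi] //=.
  by rewrite addSn; apply: leq_trans (hg _) IHi.
case: (Classical_Prop.classic (exists k, g k <> g 0)) => [[k hk]|hn].
  have lt : g (k + 0) <= v by rewrite addn0; have := mono 0 k isT; lia.
  have hg' : forall i, g (k + i.+1) <= g (k + i) by move=> i; rewrite addnS; apply: hg.
  have [K' HK'] := IH (fun i => g (k + i)) hg' lt.
  exists (k + K') => n hn; have := HK' (n - k) ltac:(lia).
  by rewrite subnKC //; lia.
exists 0 => k _; case: (g k =P g 0) => // e; exfalso; apply: hn; by exists k.
Qed.

Lemma seq_main (r : nat -> nat) (t p q : nat) (ht : 1 <= t)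
 (H0 : r 0 = 0) (Hc : forall k, r k.+2 + r k <= r k.+1 + r k.+1)
 (Hm : forall k, r k <= r k.+1)
 (H1 : r 1 <= p) (Hq : forall k, r k <= (k + t - 1) * q)
 (Hsup : forall a b, r a + r b <= r (a + (t - 1) + b)) :
 exists d J, (J <= (t - 1) * (minn p q + 1)) /\
   forall k, J <= k -> d * J <= r J /\ r k = d * k + (r J - d * J).
Proof.
pose f k := r k.+1 - r k.
have hf : forall k, f k.+1 <= f k by move=> k; rewrite /f; have := Hc k; have := Hm k; have := Hm k.+1; lia.
have fmono : forall m n, m <= n -> f n <= f m.
  move=> m n /subnK <-; elim: (n - m) => [|i IHi] //=.
  by rewrite addSn; apply: leq_trans (hf _) IHi.
have [K HK] := ev_const (v := f 0) hf (leqnn _).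
set d := f K.
have fd : forall k, d <= f k.
  move=> k; case: (leqP k K) => hk; first exact: fmono.
  by rewrite HK //; apply: ltnW.
have rstep : forall k, r k.+1 = r k + f k by move=> k; rewrite /f; have := Hm k; lia.
have rlow : forall k, d * k <= r k.
  elim=> [|k IHk]; first by rewrite H0 muln0.
  by rewrite rstep mulnS; have := fd k; lia.
have exJ : exists j, f j == d by exists K.
case: (ex_minnP exJ) => J /eqP fJ Jmin.
have JK : J <= K by apply: Jmin.
have rJ : forall j, j <= J -> (d + 1) * j <= r j.
  elim=> [|j IHj] hj; first by rewrite H0 muln0.
  have : d < f j.
    rewrite ltn_neqAle fd andbT; apply/negP => /eqP e.
    by have := Jmin j (introT eqP (esym e)); lia.
  by rewrite rstep mulnS; have := IHj (ltnW hj); lia.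
have rK : forall k, K <= k -> r k = d * k + (r K - d * K).
  move=> k /subnK <-; elim: (k - K) => [|i IHi].
    by rewrite add0n; have := rlow K; lia.
  rewrite addSn rstep IHi HK; last by lia.
  by rewrite mulnDr mulnS; have := rlow K; lia.
have hsupm : forall n m, m.+1 * r n <= r (n + m * (n + (t - 1))).
  move=> n; elim=> [|m IHm]; first by rewrite mul1n mul0n addn0.
  have := Hsup (n + m * (n + (t - 1))) n.
  have -> : n + m * (n + (t - 1)) + (t - 1) + n = n + m.+1 * (n + (t - 1)) by rewrite mulSn; lia.
  by rewrite mulSn; lia.
have rup : forall n, r n <= d * (n + (t - 1)).
  move=> n; case: n => [|n]; first by rewrite H0.
  rewrite leqNgt; apply/negP => hlt.
  set S := r K - d * K.
  set c := n.+1 + (t - 1).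
  set m := K + d * n.+1 + S.
  have mc : m <= m * c by rewrite leq_pmulr // /c.
  have hK : K <= n.+1 + m * c by rewrite /m in mc *; lia.
  have X1 := hsupm n.+1 m; rewrite -/c [r (n.+1 + _)]rK // mulnDr in X1.
  have X2 := leq_mul (leqnn m.+1) hlt; rewrite -/c in X2.
  rewrite mulnS mulSn (mulnCA d m c) in X1 X2.
  move: X1 X2; rewrite -/S /m; lia.
have Jb : J <= d * (t - 1).
  have := rup J; have := rJ J (leqnn _); rewrite mulnDr mulnDl mul1n; lia.
have dp : d <= p by have := fd 0; rewrite /f H0 subn0; lia.
have dq : d <= q.
  rewrite leqNgt; apply/negP => hlt.
  set k := ((t - 1) * q).+1.
  have := Hq k; have := rlow k.
  have := leq_mul hlt (leqnn k).
  have -> : k + t - 1 = k + (t - 1) by lia.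
  rewrite mulnDl mulSn (mulnC k q) /k; lia.
exists d, J; split.
  apply: leq_trans Jb _; rewrite mulnC; apply: leq_mul => //.
  by apply: leq_trans (leq_addr 1 _); rewrite leq_min dp dq.
move=> k Jk; split; first by have := rlow J.
move: Jk => /subnK <-; elim: (k - J) => [|i IHi].
  by rewrite add0n; have := rlow J; lia.
have fi : f (i + J) = d by apply/eqP; rewrite eqn_leq fd andbT -fJ fmono // leq_addl.
rewrite addSn rstep IHi fi mulnDr mulnS; have := rlow J; lia.
Qed.

Local Open Scope ring_scope.

Section S.
Variables (K : fieldType) (sigma : {rmorphism K -> K}) (p q t : nat) (E : 'I_t -> 'M[K]_(p,q)).
Local Notation B := (Mblock sigma E).
Fixpoint brow (a b0 n : nat) : 'M[K]_(p, n * q) :=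
  match n return 'M[K]_(p, n * q) with
  | 0 => 0
  | n'.+1 => row_mx (B a b0) (brow a b0.+1 n')
  end.
Fixpoint G (off b0 k n : nat) : 'M[K]_(k * p, n * q) :=
  match k return 'M[K]_(k * p, n * q) with 0 => 0 | k'.+1 => col_mx (brow off b0 n) (G off.+1 b0 k' n) end.
Fixpoint Gcol (off b0 k : nat) : 'M[K]_(k * p, q) := match k return 'M[K]_(k * p, q) with 0 => 0 | k'.+1 => col_mx (B off b0) (Gcol off.+1 b0 k') end.
Lemma Gcolsplit off b0 k n : G off b0 k n.+1 = row_mx (Gcol off b0 k) (G off b0.+1 k n).
Proof.
elim: k off => [|k IH] off /=; first by rewrite [X in X = _]flatmx0 [X in _ = X]flatmx0.
by rewrite IH -block_mxEh -block_mxEv.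
Qed.
Lemma iter_sigma0 c : iter c sigma 0 = 0.
Proof. by elim: c => //= c ->; rewrite rmorph0. Qed.
Lemma map_iter0 c m n : map_mx (iter c sigma) (0 : 'M[K]_(m, n)) = 0.
Proof. by apply/matrixP => i j; rewrite !mxE iter_sigma0. Qed.
Lemma rank_map_iter c m n (A : 'M[K]_(m, n)) : \rank (map_mx (iter c sigma) A) = \rank A.
Proof.
elim: c => [|c IH]; first by congr (\rank _); apply/matrixP => i j; rewrite mxE.
have -> : map_mx (iter c.+1 sigma) A = map_mx sigma (map_mx (iter c sigma) A).
  by apply/matrixP => i j; rewrite !mxE.
by rewrite mxrank_map.
Qed.
Lemma Bshift a b c : B (a + c) (b + c) = map_mx (iter c sigma) (B a b).
Proof.
rewrite /Mblock leq_add2r subnDr; case: ifP => _; last by rewrite map_iter0.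
case: insubP => [l _ _|_]; last by rewrite map_iter0.
rewrite /sigmaj; apply/matrixP => i j; rewrite !mxE addnC iterD //.
Qed.
Lemma Bzero1 a b : (b < a)%N -> B a b = 0.
Proof. by rewrite /Mblock ltnNge => /negbTE ->. Qed.
Lemma Bzero2 a b : (a + t <= b)%N -> B a b = 0.
Proof.
move=> h; rewrite /Mblock; case: ifP => // _.
by rewrite insubN // -leqNgt leq_subRL // (leq_trans _ h) // leq_addr.
Qed.
Lemma browshift a b0 n c : brow (a + c) (b0 + c) n = map_mx (iter c sigma) (brow a b0 n).
Proof.
elim: n b0 => [|n IH] b0 /=; first by rewrite [X in X = _]thinmx0 [X in _ = X]thinmx0.
by rewrite map_row_mx Bshift -addSn IH.
Qed.
Lemma Gshift off b0 k n c : G (off + c) (b0 + c) k n = map_mx (iter c sigma) (G off b0 k n).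
Proof.
elim: k off => [|k IH] off /=; first by rewrite [X in X = _]flatmx0 [X in _ = X]flatmx0.
by rewrite map_col_mx browshift -addSn IH.
Qed.
Lemma browzero a b0 n : (forall j, (j < n)%N -> B a (b0 + j) = 0) -> brow a b0 n = 0.
Proof.
elim: n b0 => [|n IH] b0 h /=; first by rewrite [X in X = _]thinmx0 [X in _ = X]thinmx0.
rewrite IH; last by move=> j hj; rewrite addSnnS h.
by have := h 0 isT; rewrite addn0 => ->; rewrite row_mx0.
Qed.
Lemma Gzero off b0 k n : (forall i j, (i < k)%N -> (j < n)%N -> B (off + i) (b0 + j) = 0) -> G off b0 k n = 0.
Proof.
elim: k off => [|k IH] off h /=; first by rewrite [X in X = _]flatmx0 [X in _ = X]flatmx0.
rewrite IH; last by move=> i j hi hj; rewrite addSnnS h.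
by rewrite browzero ?col_mx0 // => j hj; have := h 0 j isT hj; rewrite addn0.
Qed.
Lemma rank_cast m n m' n' (e : (m = m') * (n = n')) (A : 'M[K]_(m, n)) :
  \rank (castmx e A) = \rank A.
Proof. by case: e => e1 e2; case: m' / e1; case: n' / e2; rewrite castmx_id. Qed.
Lemma row_mx_cast_assoc m n1 n2 n3 N (e : (n2 + n3)%N = N) (A : 'M[K]_(m, n1)) B' C :
  exists e', row_mx A (castmx (erefl, e) (row_mx B' C)) = castmx (erefl, e') (row_mx (row_mx A B') C).
Proof.
case: N / e; rewrite castmx_id row_mxA.
by exists (esym (addnA n1 n2 n3)); apply: eq_castmx.
Qed.
Lemma Gsplit off b0 k n1 n2 : exists e,
  G off b0 k (n1 + n2) = castmx (erefl, e) (row_mx (G off b0 k n1) (G off (b0 + n1) k n2)).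
Proof.
elim: n1 b0 => [|n1 IH] b0.
  by exists erefl; rewrite castmx_id addn0 row_thin_mx.
have [e He] := IH b0.+1.
rewrite addSn Gcolsplit He.
have [e' ->] := row_mx_cast_assoc e (Gcol off b0 k) (G off b0.+1 k n1) (G off (b0.+1 + n1) k n2).
rewrite -Gcolsplit addSnnS; by exists e'.
Qed.
Lemma Gsplitrow off b0 k1 k2 n : (G off b0 (k1 + k2) n :=: G off b0 k1 n + G (off + k1) b0 k2 n)%MS.
Proof.
elim: k1 off => [|k1 IH] off.
  by rewrite addn0 /=; apply: eqmx_sym; apply: adds0mx.
rewrite /= -addSnnS.
apply: eqmx_trans (eqmx_sym (addsmxE _ _)) _.
apply: eqmx_trans (adds_eqmx (eqmx_refl _) (IH off.+1)) _.
rewrite addsmxA; apply: adds_eqmx (addsmxE _ _) (eqmx_refl _).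
Qed.
Definition r k := \rank (G 0 0 k (k + t - 1)).
Lemma shiftrank off k n : (k + t - 1 <= n)%N -> \rank (G off 0 k (off + n)) = r k.
Proof.
move=> h; have [e ->] := Gsplit off 0 k off n.
rewrite rank_cast Gzero ?rank_row_0mx; last first.
  by move=> i j hi hj; apply: Bzero1; lia.
rewrite -[off]add0n Gshift rank_map_iter -(subnKC h).
have [e' ->] := Gsplit 0 0 k (k + t - 1) (n - (k + t - 1)).
rewrite rank_cast [G 0 (0 + _) _ _]Gzero ?rank_row_mx0 //.
by move=> i j hi hj; apply: Bzero2; lia.
Qed.
Lemma r0 : r 0 = 0%N.
Proof. by rewrite /r /= mxrank0. Qed.
Lemma r1p : (r 1 <= p)%N.
Proof. by rewrite /r; apply: leq_trans (rank_leq_row _) _; rewrite mul1n. Qed.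
Lemma rq k : (r k <= (k + t - 1) * q)%N.
Proof. exact: rank_leq_col. Qed.
Lemma LsplitA off b0 k1 k2 n :
  \rank (G off b0 k1 n + G (off + k1) b0 k2 n)%MS = \rank (G off b0 (k1 + k2) n).
Proof. by rewrite (Gsplitrow off b0 k1 k2 n). Qed.
Lemma rS k : (r k.+2 + r k <= r k.+1 + r k.+1)%N /\ (r k <= r k.+1)%N.
Proof.
set N := (k + t).+1.
set T := G 0 0 1 N; set A := G 1 0 k N; set Bm := G (1 + k) 0 1 N.
have hTA : \rank (T + A)%MS = r k.+1.
  rewrite (LsplitA 0 0 1 k N) -(shiftrank 0 (k:=k.+1) (n:=N)) //; lia.
have hAB : \rank (A + Bm)%MS = r k.+1.
  rewrite (LsplitA 1 0 k 1 N) addn1 -(shiftrank 1 (k:=k.+1) (n:=k + t)) //; lia.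
have hA : \rank A = r k by rewrite -(shiftrank 1 (k:=k) (n:=k + t)) //; lia.
have hall : \rank (T + A + Bm)%MS = r k.+2.
  have e : (T + A + Bm :=: G 0 0 (1 + k + 1) N)%MS.
    apply: eqmx_trans (adds_eqmx (eqmx_sym (Gsplitrow 0 0 1 k N)) (eqmx_refl _)) _.
    exact: eqmx_sym (Gsplitrow 0 0 (1 + k) 1 N).
  rewrite e -(shiftrank 0 (k:=k.+2) (n:=N)) ?addn1 //; lia.
have s1 : (T + A + Bm <= (T + A) + (A + Bm))%MS.
  rewrite !addsmx_sub -!andbA; apply/and3P; split.
  - exact: submx_trans (addsmxSl T A) (addsmxSl _ _).
  - exact: submx_trans (addsmxSr T A) (addsmxSl _ _).
  - exact: submx_trans (addsmxSr A Bm) (addsmxSr _ _).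
have s2 : (A <= (T + A) :&: (A + Bm))%MS by rewrite sub_capmx addsmxSl addsmxSr.
have := mxrank_sum_cap (T + A)%MS (A + Bm)%MS.
have := mxrankS s1; have := mxrankS s2; have := mxrankS (addsmxSl A Bm).
rewrite hTA hAB hA hall; lia.
Qed.
Lemma rSup (ht : (1 <= t)%N) a b : (r a + r b <= r (a + (t - 1) + b))%N.
Proof.
set c := (a + t - 1)%N.
have hc : (a + (t - 1))%N = c by rewrite /c; lia.
rewrite hc.
set N := (c + (b + t - 1))%N.
have hall : \rank (G 0 0 (c + b) N) = r (c + b).
  by rewrite -(shiftrank 0 (k:=c+b) (n:=N)) //; rewrite /N /c; lia.
have sub1 : (G 0 0 a N <= G 0 0 c N)%MS by rewrite -hc (Gsplitrow 0 0 a (t-1) N) addsmxSl.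
have sub2 : (G 0 0 a N + G c 0 b N <= G 0 0 (c + b) N)%MS.
  by rewrite (Gsplitrow 0 0 c b N) addsmxS.
rewrite -hall; apply: leq_trans (mxrankS sub2); rewrite addsmxE.
have [e1 ->] := Gsplit 0 0 a c (b + t - 1).
have [e2 ->] := Gsplit c 0 b c (b + t - 1).
rewrite [G 0 (0 + c) _ _]Gzero; last by move=> i j hi hj; apply: Bzero2; rewrite /c; lia.
rewrite [G c 0 b c]Gzero; last by move=> i j hi hj; apply: Bzero1; rewrite /c; lia.
rewrite (eq_castmx (erefl _, e2) (erefl _, e1)) -cast_col_mx rank_cast -block_mxEv.
rewrite rank_diag_block_mx.
have -> : G c (0 + c) b (b + t - 1) = map_mx (iter c sigma) (G 0 0 b (b + t - 1)).
  by rewrite -Gshift.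
by rewrite rank_map_iter.
Qed.
Lemma row_mx_castr m n1 n2 n2' (e : n2 = n2') (A : 'M[K]_(m, n1)) (X : 'M[K]_(m, n2)) :
  exists e', row_mx A (castmx (erefl, e) X) = castmx (erefl, e') (row_mx A X).
Proof. by case: n2' / e; exists erefl; rewrite !castmx_id. Qed.
Lemma col_mx_cast2 m1 m2 m2' n n' (e2 : m2 = m2') (en : n = n') (X : 'M[K]_(m1, n)) (Y : 'M[K]_(m2, n)) :
  exists e, col_mx (castmx (erefl, en) X) (castmx (e2, en) Y) = castmx (e, en) (col_mx X Y).
Proof. by case: m2' / e2; case: n' / en; exists erefl; rewrite !castmx_id. Qed.
Lemma mxrow_brow off b0 n : exists e,
  \mxrow_(j < n) B off (b0 + j) = castmx (erefl, e) (brow off b0 n).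
Proof.
elim: n b0 => [|n IH] b0.
  have e : (0 * q = \sum_(j < 0) q)%N by rewrite big_ord0.
  exists e; apply/matrixP => i j; exfalso.
  by have := ltn_ord j; move: (nat_of_ord j) => x; rewrite big_ord0.
rewrite mxrow_recl.
have -> : \mxrow_(j < n) B off (b0 + lift ord0 j) = \mxrow_(j < n) B off (b0.+1 + j).
  by apply: eq_mxrow => j; rewrite /= /bump /= add1n addSnnS.
have [e ->] := IH b0.+1.
have [e' ->] := row_mx_castr e (B off (b0 + 0)) (brow off b0.+1 n).
rewrite castmx_comp addn0 /=.
by exists (etrans e' mxsize_recl).
Qed.
Lemma mxblock_G off b0 k n : exists e,
  \mxblock_(i < k, j < n) B (off + i) (b0 + j) = castmx e (G off b0 k n).
Proof.
elim: k off => [|k IH] off.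
  have [en _] := mxrow_brow off b0 n.
  have e : (0 * p = \sum_(i < 0) p)%N by rewrite big_ord0.
  exists (e, en); apply/matrixP => i j; exfalso.
  by have := ltn_ord i; move: (nat_of_ord i) => x; rewrite big_ord0.
rewrite mxblock_recu.
have -> : \mxblock_(i < k, j < n) B (off + lift ord0 i) (b0 + j) =
          \mxblock_(i < k, j < n) B (off.+1 + i) (b0 + j).
  by apply: eq_mxblock => i j; rewrite /= /bump /= add1n addSnnS.
have [[e1 e2] ->] := IH off.+1.
have [e ->] := mxrow_brow (off + 0) b0 n.
rewrite (eq_castmx (erefl _, e) (erefl _, e2)).
have [e' ->] := col_mx_cast2 e1 e2 (brow (off + 0) b0 n) (G off.+1 b0 k n).
rewrite castmx_comp addn0 /=.
by exists (etrans e' mxsize_recl, etrans e2 erefl).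
Qed.
Lemma rankMk k : \rank (Mk sigma E k) = r k.
Proof.
have [e He] := mxblock_G 0 0 k (k + t - 1).
rewrite /Mk -[X in \rank X]/(\mxblock_(i < k, j < k + t - 1) B (0 + i) (0 + j)) He.
by rewrite rank_cast.
Qed.
End S.

Theorem mainTheorem2 (K : fieldType) (sigma : {rmorphism K -> K})
  (p q t : nat) (ht : (1 <= t)%N) (E : 'I_t -> 'M[K]_(p, q)) :
  exists (d : nat) (s : int),
    (exists k1 : nat, forall k : nat, (k1 <= k)%N ->
        (\rank (Mk sigma E k))%:Z = (d * k)%:Z + s) /\
    (forall k : nat, (1 <= k)%N -> ((t - 1) * (minn p q + 1) <= k)%N ->
        (\rank (Mk sigma E k))%:Z = (d * k)%:Z + s).
Proof.
have [d [J [HJ Hk]]] := seq_main ht (r0 sigma E) (fun k => proj1 (rS sigma E k))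
  (fun k => proj2 (rS sigma E k)) (r1p sigma E) (rq sigma E) (rSup sigma E ht).
exists d, ((r sigma E J)%:Z - (d * J)%:Z).
have main : forall k, (J <= k)%N -> (\rank (Mk sigma E k))%:Z = (d * k)%:Z + ((r sigma E J)%:Z - (d * J)%:Z).
  move=> k hk; have [h1 h2] := Hk k hk.
  by rewrite rankMk h2 PoszD subzn.
split; first by exists J.
by move=> k _ hk; apply: main; apply: leq_trans HJ hk.
Qed.
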